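(* Let $\Gamma$ be a Shilla distance-regular graph with $b(\Gamma)=b$. Then: (i) $c_2$ divides $(b-1)a_3b_2$; (ii) $c_2$ divides $(b-1)ba_3(a_3+1)$; (iii) $c_2$ divides $b(a_3+1)b_2$; (iv) $c_2$ divides $(b+a_3)b_2$, and $(b+a_3)b_2\geq (1+a_3)c_2$, with equality if and only if $p^3_{33}=0$; (v) $c_2$ divides $(b-1)bb_2$.
   Context: A connected graph $\Gamma$ of diameter $D$ is distance-regular if there are integers $b_i,c_i$ ($0\le i\le D$) such that for any two vertices $x,y$ at distance $i$, exactly $c_i$ neighbours of $y$ are at distance $i-1$ from $x$ and exactly $b_i$ neighbours of $y$ are at distance $i+1$ from $x$. Then $\Gamma$ is regular of valency $k=b_0$, and $a_i:=k-b_i-c_i$. For vertices $x,y$ at distance $i$, $p^i_{jl}$ denotes the number of vertices $z$ with $d(x,z)=j$ and $d(y,z)=l$ (independent of the choice of $x,y$). The eigenvalues of $\Gamma$ are those of its adjacency matrix; $\Gamma$ has exactly $D+1$ distinct eigenvalues $k=\theta_0>\theta_1>\dots>\theta_D$. A Shilla distance-regular graph is a distance-regular graph of diameter $3$ whose second largest eigenvalue satisfies $\theta_1=a_3$. For such graphs $k=(a_3-a_1)a_3$, and one defines $b(\Gamma):=a_3-a_1=k/a_3$. *)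

(* Defs.v *)
From mathcomp Require Import all_boot all_order all_algebra all_field.
Set Implicit Arguments. Unset Strict Implicit. Unset Printing Implicit Defensive.
Import Order.TTheory GRing.Theory Num.Theory.

Definition simple_graph n (e : rel 'I_n) :=
  symmetric e /\ irreflexive e.

Fixpoint nbhd_within n (e : rel 'I_n) (x : 'I_n) (i : nat) : {set 'I_n} :=
  match i with
  | 0 => [set x]
  | i'.+1 => let S := nbhd_within e x i' in
             S :|: [set y | [exists z in S, e z y]]
  end.

(* graph distance: least i with y within i steps of x
   (returns n when y is unreachable; never happens in connected graphs) *)
Definition dist n (e : rel 'I_n) (x y : 'I_n) : nat :=
  find (fun i => y \in nbhd_within e x i) (iota 0 n).

Definition connected n (e : rel 'I_n) :=
  forall x y : 'I_n, exists i, y \in nbhd_within e x i.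

Definition has_diameter n (e : rel 'I_n) (D : nat) :=
  (forall x y, dist e x y <= D) /\ (exists x y, dist e x y = D).

Definition distance_regular n (e : rel 'I_n) (D : nat) (b c : nat -> nat) :=
  [/\ simple_graph e, connected e, has_diameter e D &
    forall i, i <= D -> forall x y, dist e x y = i ->
      #|[set z | e y z & dist e x z == i.-1]| = c i /\
      #|[set z | e y z & dist e x z == i.+1]| = b i].

Definition valency (b : nat -> nat) := b 0.
Definition a_num (b c : nat -> nat) (i : nat) := (b 0 - b i - c i)%N.

(* p^i_{jl} evaluated at the pair (x,y) *)
Definition pnum n (e : rel 'I_n) (x y : 'I_n) (j l : nat) :=
  #|[set z | (dist e x z == j) && (dist e y z == l)]|.

Definition adjmx n (e : rel 'I_n) : 'M[algC]_n :=
  \matrix_(i, j) ((e i j)%:R)%R.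

Local Open Scope ring_scope.

Definition second_largest_eigenvalue n (M : 'M[algC]_n) (t : algC) :=
  exists t0, [/\ eigenvalue M t0, eigenvalue M t, t < t0,
    (forall s, eigenvalue M s -> s <= t0) &
    (forall s, eigenvalue M s -> s != t0 -> s <= t)].

Definition shilla n (e : rel 'I_n) (b c : nat -> nat) :=
  distance_regular e 3 b c /\
  second_largest_eigenvalue (adjmx e) (a_num b c 3%N)%:R.

Definition bGamma (b c : nat -> nat) : int :=
  (a_num b c 3)%:Z - (a_num b c 1)%:Z.

(* Main.v *)
Require Import Defs.
From mathcomp Require Import all_boot all_order all_algebra all_field zify ring.
Set Implicit Arguments. Unset Strict Implicit. Unset Printing Implicit Defensive.
Import Order.TTheory GRing.Theory Num.Theory.

Lemma S_succ n (e : rel 'I_n) x i y :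
  (y \in nbhd_within e x i.+1) = (y \in nbhd_within e x i) || [exists z in nbhd_within e x i, e z y].
Proof. by rewrite /= in_setU in_set. Qed.

Lemma S_mono n (e : rel 'I_n) x i j : i <= j -> nbhd_within e x i \subset nbhd_within e x j.
Proof.
move=> /subnK <-; elim: (j - i) => [|k IH] //=.
apply: subset_trans IH _; exact: subsetUl.
Qed.

Lemma S_ext n (e : rel 'I_n) x i y z : y \in nbhd_within e x i -> e y z -> z \in nbhd_within e x i.+1.
Proof. by move=> hy hz; rewrite S_succ; apply/orP; right; apply/existsP; exists y; rewrite hy. Qed.

Lemma S_pre n (e : rel 'I_n) x i y w : y \in nbhd_within e x i -> e w x -> y \in nbhd_within e w i.+1.
Proof.
elim: i y => [|i IH] y.
  by move=> /set1P -> hw; apply: S_ext hw; rewrite /= inE.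
move=> hy0 hw; move: hy0; rewrite S_succ => /orP [hy|/existsP [z /andP [hz hzy]]].
  by apply: (subsetP (S_mono _ _ (leqnSn _))); apply: IH.
by apply: S_ext (IH _ hz hw) hzy.
Qed.

Lemma S_sym n (e : rel 'I_n) x i y : symmetric e -> y \in nbhd_within e x i -> x \in nbhd_within e y i.
Proof.
move=> hs; elim: i x y => [|i IH] x y.
  by rewrite /= !inE eq_sym.
rewrite S_succ => /orP [hy|/existsP [z /andP [hz hzy]]].
  by apply: (subsetP (S_mono _ _ (leqnSn _))); apply: IH.
apply: S_pre (IH _ _ hz) _; by rewrite hs.
Qed.

Lemma S_stab_gen n (e : rel 'I_n) x i :
  (exists2 j, j < i & nbhd_within e x j.+1 = nbhd_within e x j) \/ i < #|nbhd_within e x i|.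
Proof.
elim: i => [|i [[j hj hS]|hi]].
- by right; rewrite /= cards1.
- by left; exists j => //; apply: ltnW.
- have [hS|hS] := eqVneq (nbhd_within e x i.+1) (nbhd_within e x i).
    by left; exists i.
  right; apply: leq_ltn_trans hi _.
  apply: proper_card; rewrite properEneq eq_sym hS /=.
  exact: S_mono (leqnSn _).
Qed.

Lemma S_stab n (e : rel 'I_n) x :
  exists2 j, j < n & forall m, j <= m -> nbhd_within e x m = nbhd_within e x j.
Proof.
have [[j hj hS]|hi] := S_stab_gen e x n; last first.
  by move: (max_card (mem (nbhd_within e x n))); rewrite card_ord leqNgt hi.
exists j => // m /subnK <-; elim: (m - j) => [|k IH] //.
by rewrite addSn -hS; move: IH => /= ->.
Qed.

Lemma S_small n (e : rel 'I_n) x y i : y \in nbhd_within e x i ->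
  exists2 j, j < n & y \in nbhd_within e x j.
Proof.
move=> hy; have [j hj hS] := S_stab e x.
have [hij|hji] := leqP j i.
  by exists j => //; rewrite -(hS i hij).
exists i => //; exact: ltn_trans hji hj.
Qed.

Lemma distP n (e : rel 'I_n) x y i : connected e ->
  (dist e x y <= i) = (y \in nbhd_within e x i).
Proof.
move=> hc; have [i0 hi0] := hc x y.
have [j hj hy] := S_small hi0.
set P := fun i => y \in nbhd_within e x i.
have hP : has P (iota 0 n) by apply/hasP; exists j => //; rewrite mem_iota.
have hlt : dist e x y < n by move: hP; rewrite has_find size_iota.
have hPd : P (dist e x y).
  by move: (nth_find 0 hP); rewrite nth_iota.
apply/idP/idP => [hle|hi].
  exact: (subsetP (S_mono _ _ hle)).
rewrite leqNgt; apply/negP => hlt2.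
have := before_find 0 hlt2; rewrite nth_iota.
  by rewrite /P add0n hi.
exact: ltn_trans hlt2 hlt.
Qed.

Lemma dist_xx n (e : rel 'I_n) x : connected e -> dist e x x = 0.
Proof. by move=> hc; apply/eqP; rewrite -leqn0 (distP _ _ _ hc) /= inE. Qed.

Lemma dist0 n (e : rel 'I_n) x y : connected e -> dist e x y = 0 -> y = x.
Proof.
move=> hc h; have : dist e x y <= 0 by rewrite h.
by rewrite (distP _ _ _ hc) /= inE => /eqP.
Qed.

Lemma dist_sym n (e : rel 'I_n) x y : connected e -> symmetric e -> dist e x y = dist e y x.
Proof.
move=> hc hs; apply/eqP; rewrite eqn_leq !(distP _ _ _ hc).
by apply/andP; split; apply: S_sym => //; rewrite -(distP _ _ _ hc).
Qed.

Lemma dist_nb n (e : rel 'I_n) x y z : connected e -> e y z -> dist e x z <= (dist e x y).+1.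
Proof.
move=> hc hyz; rewrite (distP _ _ _ hc); apply: S_ext hyz.
by rewrite -(distP _ _ _ hc).
Qed.

Lemma dist_pred n (e : rel 'I_n) x y d : connected e -> dist e x y = d.+1 ->
  exists z, e z y /\ dist e x z = d.
Proof.
move=> hc hd.
have : y \in nbhd_within e x d.+1 by rewrite -(distP _ _ _ hc) hd.
rewrite S_succ => /orP [|/existsP [z /andP [hz hzy]]].
  by rewrite -(distP _ _ _ hc) hd ltnn.
exists z; split => //; apply/eqP; rewrite eqn_leq (distP _ _ _ hc) hz /=.
by rewrite -ltnS -hd dist_nb.
Qed.

Definition F n (e : rel 'I_n) u v j := #|[set w | e v w & dist e u w == j]|.
Definition G (b c : nat -> nat) l j :=
  if (0 < l) && (j == l.-1) then c l else if j == l then a_num b c l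
  else if j == l.+1 then b l else 0.

Lemma card_sumb n (P : pred 'I_n) : #|[set w | P w]| = \sum_w (P w : nat).
Proof.
rewrite -sum1_card big_mkcond /=; apply: eq_bigr => w _; rewrite inE.
by case: (P w).
Qed.

Definition DRG n (e : rel 'I_n) (b c : nat -> nat) :=
  forall i, i <= 3 -> forall x y, dist e x y = i -> F e x y i.-1 = c i /\ F e x y i.+1 = b i.

Lemma nb_range n (e : rel 'I_n) u v w : connected e -> symmetric e -> e v w ->
  dist e u w <= (dist e u v).+1 /\ dist e u v <= (dist e u w).+1.
Proof.
move=> hc hs hvw; split; apply: dist_nb => //; by rewrite hs.
Qed.

Lemma deg n (e : rel 'I_n) b c v : connected e -> symmetric e -> irreflexive e ->
  DRG e b c -> #|[set w | e v w]| = b 0.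
Proof.
move=> hc hs hir hD; have [_ <-] := hD 0 isT v v (dist_xx _ hc).
apply: eq_card => w; rewrite !inE; case hvw: (e v w) => //=.
have [h1 _] := nb_range v hc hs hvw; rewrite dist_xx // in h1.
rewrite eqn_leq h1 /= lt0n; apply/esym/negP => /eqP /(dist0 hc) hw.
by move: hvw; rewrite hw hir.
Qed.

Lemma part n (e : rel 'I_n) b c u v : connected e -> symmetric e -> irreflexive e ->
  DRG e b c -> 0 < dist e u v ->
  F e u v (dist e u v).-1 + F e u v (dist e u v) + F e u v (dist e u v).+1 = b 0.
Proof.
move=> hc hs hir hD hl; rewrite -(deg v hc hs hir hD) card_sumb /F !card_sumb -!big_split /=.
apply: eq_bigr => w _; case hvw: (e v w) => //=.
have [h1 h2] := nb_range u hc hs hvw.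
move: h1 h2 hl; set l := dist e u v; set d := dist e u w.
case: l => // l; rewrite /= => h1 h2 _.
by do 3 case: eqP; lia.
Qed.

Lemma F_zero n (e : rel 'I_n) u v j : connected e -> symmetric e ->
  j != (dist e u v).-1 -> j != dist e u v -> j != (dist e u v).+1 -> F e u v j = 0.
Proof.
move=> hc hs h1 h2 h3; rewrite /F card_sumb; apply: big1 => w _.
case hvw: (e v w) => //=; have [k1 k2] := nb_range u hc hs hvw.
case: eqP => // hj; move: h1 h2 h3 => /eqP h1 /eqP h2 /eqP h3; lia.
Qed.

Lemma FG n (e : rel 'I_n) b c u v j : connected e -> symmetric e -> irreflexive e ->
  DRG e b c -> (forall x y, dist e x y <= 3) -> F e u v j = G b c (dist e u v) j.
Proof.
move=> hc hs hir hD hdm; rewrite /G.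
have [hcl hbl] := hD _ (hdm u v) u v erefl.
case: (boolP ((0 < dist e u v) && (j == (dist e u v).-1))) => [/andP [_ /eqP ->]//|hnot].
case: eqP => [->|hjl].
  rewrite /a_num; case: (posnP (dist e u v)) => [h0|hpos].
    rewrite h0 subnn sub0n /F card_sumb; apply: big1 => w _.
    case hvw: (e v w) => //=; case: eqP => // /(dist0 hc) hw.
    have hv := dist0 hc h0; by rewrite hw hv hir in hvw.
  have := part hc hs hir hD hpos; rewrite hcl hbl => <-.
  lia.
case: eqP => [->//|hj1].
apply: F_zero => //; try exact/eqP.
apply/eqP => hj; move: hnot hjl; rewrite hj; case: (dist e u v) => //= l.
by rewrite eqxx.
Qed.

Lemma dc n (e : rel 'I_n) x y i j : symmetric e ->
  \sum_z (dist e x z == i) * F e y z j = \sum_z (dist e y z == j) * F e x z i.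
Proof.
move=> hs; rewrite /F.
under eq_bigr => z _ do rewrite (card_sumb (fun w => e z w && (dist e y w == j))) big_distrr.
under [RHS]eq_bigr => z _ do rewrite (card_sumb (fun w => e z w && (dist e x w == i))) big_distrr.
rewrite [RHS]exchange_big /=; apply: eq_bigr => z _; apply: eq_bigr => w _.
by rewrite !mulnb hs; case: (dist e x z == i); case: (e w z); case: (dist e y w == j).
Qed.

Lemma group n (e : rel 'I_n) (P : pred 'I_n) (h : nat -> nat) u :
  (forall x y, dist e x y <= 3) ->
  \sum_z P z * h (dist e u z) = \sum_(l < 4) #|[set z | P z && (dist e u z == l)]| * h l.
Proof.
move=> hdm.
under [RHS]eq_bigr => l _ do rewrite (card_sumb (fun z => P z && (dist e u z == l))) big_distrl.
rewrite [RHS]exchange_big /=; apply: eq_bigr => z _.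
rewrite !big_ord_recr big_ord0 /=.
have := hdm u z; case: (dist e u z) => [|[|[|[|d]]]] //= _; case: (P z); rewrite /= ?muln0 ?mul0n ?add0n ?addn0 //.
Qed.

Lemma GL n (e : rel 'I_n) b c x y i j : connected e -> symmetric e -> irreflexive e ->
  DRG e b c -> (forall x y, dist e x y <= 3) ->
  \sum_(l < 4) pnum e x y i l * G b c l j = \sum_(l < 4) pnum e x y l j * G b c l i.
Proof.
move=> hc hs hir hD hdm.
have := dc x y i j hs.
under eq_bigr => z _ do rewrite (FG _ _ _ hc hs hir hD hdm).
under [in X in _ = X -> _]eq_bigr => z _ do rewrite (FG _ _ _ hc hs hir hD hdm).
rewrite (group (fun z => dist e x z == i) (G b c ^~ j) y hdm).
rewrite (group (fun z => dist e y z == j) (G b c ^~ i) x hdm) => ->.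
apply: eq_bigr => l _; congr (_ * _); apply: eq_card => z; by rewrite !inE andbC.
Qed.

Local Open Scope ring_scope.

Definition sv n (e : rel 'I_n) (v : 'rV[algC]_n) x i :=
  \sum_z ((dist e x z == i)%:R * v 0 z).

Lemma eig_sum n (e : rel 'I_n) b c (v : 'rV[algC]_n) (th : algC) x i :
  connected e -> symmetric e -> irreflexive e ->
  DRG e b c -> (forall x y, dist e x y <= 3)%N ->
  v *m adjmx e = th *: v ->
  th * sv e v x i = \sum_(l < 4) (G b c l i)%:R * sv e v x l.
Proof.
move=> hc hs hir hD hdm hv.
rewrite /sv mulr_sumr.
have h1 z : th * v 0 z = \sum_w v 0 w * (e w z)%:R.
  have := congr1 (fun M : 'M[algC]_(1,n) => M 0 z) hv; rewrite !mxE => <-.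
  by apply: eq_bigr => w _; rewrite mxE.
under eq_bigr => z _ do rewrite mulrCA h1 mulr_sumr.
rewrite exchange_big /=.
have h2 w : \sum_z (dist e x z == i)%:R * (v 0 w * (e w z)%:R) = v 0 w * (G b c (dist e x w) i)%:R.
  rewrite -(FG _ _ _ hc hs hir hD hdm) /F card_sumb natr_sum mulr_sumr.
  apply: eq_bigr => z _; rewrite mulrCA; congr (_ * _).
  by case: (e w z); case: (dist e x z == i); rewrite /= ?mulr0 ?mulr1 ?mul0r.
under eq_bigr => w _ do rewrite h2.
under [RHS]eq_bigr => l _ do rewrite mulr_sumr.
rewrite [RHS]exchange_big /=; apply: eq_bigr => w _.
rewrite !big_ord_recr big_ord0 /=.
have := hdm x w; case: (dist e x w) => [|[|[|[|d]]]] //= _.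
all: by rewrite !mul0r !mulr0 !mul1r ?add0r ?addr0 mulrC.
Qed.

Lemma sv0 n (e : rel 'I_n) (v : 'rV[algC]_n) x : connected e -> sv e v x 0 = v 0 x.
Proof.
move=> hc; rewrite /sv (bigD1 x) //= dist_xx // eqxx mul1r big1 ?addr0 // => z hz.
case: eqP => [/(dist0 hc) hzx|_]; last by rewrite mul0r.
by rewrite hzx eqxx in hz.
Qed.

Lemma eig_cons n (e : rel 'I_n) b c :
  connected e -> symmetric e -> irreflexive e ->
  DRG e b c -> (forall x y, dist e x y <= 3)%N -> c 1%N = 1%N -> (0 < b 2)%N ->
  eigenvalue (adjmx e) (a_num b c 3)%:R ->
  (a_num b c 3 * a_num b c 3 = b 0 + a_num b c 1 * a_num b c 3)%N.
Proof.
move=> hc hs hir hD hdm hc1 hb2 /eigenvalueP [v hv vnz].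
have [x hx] : exists x, v 0 x != 0.
  case: (pickP (fun x => v 0 x != 0)) => [x hx|h0]; first by exists x.
  move: vnz; have -> : v = 0; last by rewrite eqxx.
  by apply/rowP => j; rewrite mxE; apply/eqP/negbFE/h0.
set th : algC := (a_num b c 3)%:R.
have e0 := @eig_sum _ e b c v _ x 0%N hc hs hir hD hdm hv.
have e1 := @eig_sum _ e b c v _ x 1%N hc hs hir hD hdm hv.
have e3 := @eig_sum _ e b c v _ x 3%N hc hs hir hD hdm hv.
have a0 : a_num b c 0 = 0%N by rewrite /a_num subnn sub0n.
rewrite !big_ord_recr !big_ord0 /G /= ?a0 ?hc1 in e0 e1 e3.
rewrite sv0 // in e0 e1 e3.
set s1 := sv e v x 1 in e0 e1 e3; set s2 := sv e v x 2 in e0 e1 e3;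
set s3 := sv e v x 3 in e0 e1 e3.
have hs2 : s2 = 0.
  have : (b 2)%:R * s2 = 0 :> algC.
    move: e3; rewrite /th !mul0r !add0r => h; apply: (addIr ((a_num b c 3)%:R * s3)); by rewrite add0r -h.
  by move/eqP; rewrite mulf_eq0 pnatr_eq0 eqn0Ngt hb2 /= => /eqP.
have hs1 : s1 = th * v 0 x by move: e0; rewrite !mul0r mul1r !addr0 add0r.
have : (th * th - (b 0)%:R - (a_num b c 1)%:R * th) * v 0 x = 0.
  move: e1; rewrite hs2 hs1 !mulr0 !addr0 add0r => h.
  by rewrite !mulrBl -mulrA h; ring.
move/eqP; rewrite mulf_eq0 (negbTE hx) orbF subr_eq0 subr_eq => /eqP h.
apply/eqP; rewrite -(eqr_nat algC) natrD !natrM -/th h addrC; exact: eqxx.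
Qed.

Local Close Scope ring_scope.

Lemma pnum0 n (e : rel 'I_n) x y l : connected e ->
  pnum e x y 0 l = (dist e y x == l).
Proof.
move=> hc; rewrite /pnum.
have -> : [set z | (dist e x z == 0) && (dist e y z == l)] =
          if dist e y x == l then [set x] else set0.
  apply/setP => z; rewrite !inE; case: eqP => [/(dist0 hc) ->|hz].
    by case: (dist e y x == l); rewrite ?inE ?eqxx.
  case: (dist e y x == l); rewrite ?inE //.
  by apply/esym/eqP => hzx; apply: hz; rewrite hzx dist_xx.
by case: (dist e y x == l); rewrite ?cards1 ?cards0.
Qed.

Lemma pnum_diag n (e : rel 'I_n) x i l : i != l -> pnum e x x i l = 0.
Proof.
move=> hil; rewrite /pnum; apply/eqP; rewrite cards_eq0; apply/eqP/setP => z.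
rewrite !inE; apply/negP => /andP [/eqP -> /eqP h]; by rewrite h eqxx in hil.
Qed.

Lemma pair3 n (e : rel 'I_n) b c x y : connected e -> symmetric e -> irreflexive e ->
  DRG e b c -> (forall x y, dist e x y <= 3) -> c 1 = 1 ->
  dist e x y = 3 ->
  let N := pnum e x y in let a := a_num b c in
  [/\ c 3 * a 2 + a 3 * c 3 = c 3 * a 1 + c 2 * N 2 2,
      c 3 * b 2 + a 3 * a 3 = b 0 + a 3 * a 1 + c 2 * N 2 3 &
      N 2 2 * b 2 + N 2 3 * a 3 = a 3 * b 1 + N 2 3 * a 2 + N 3 3 * c 3].
Proof.
move=> hc hs hir hD hdm hc1 hxy N a.
have hyx : dist e y x = 3 by rewrite dist_sym.
have a0 : a_num b c 0 = 0 by rewrite /a_num subnn sub0n.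
have gl i j := @GL _ e b c x y i j hc hs hir hD hdm.
have n0 l : pnum e x y 0 l = (3 == l) by rewrite pnum0 // hyx.
have e1 l : pnum e x y 1 l = G b c 3 l.
  have := gl 0 l; rewrite !big_ord_recr !big_ord0 /= !n0 /G /= a0 hc1.
  case: l => [|[|[|[|l]]]] /=; lia.
have := gl 1 2; have := gl 1 3; have := gl 2 3.
rewrite !big_ord_recr !big_ord0 /= !n0 !e1 /G /=.
rewrite /N /a => h1 h2 h3; split; lia.
Qed.

Lemma pairxx n (e : rel 'I_n) b c x : connected e -> symmetric e -> irreflexive e ->
  DRG e b c -> (forall x y, dist e x y <= 3) -> c 1 = 1 ->
  pnum e x x 1 1 = b 0 /\ pnum e x x 1 1 * b 1 = pnum e x x 2 2 * c 2.
Proof.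
move=> hc hs hir hD hdm hc1.
have a0 : a_num b c 0 = 0 by rewrite /a_num subnn sub0n.
have gl i j := @GL _ e b c x x i j hc hs hir hD hdm.
have n0 l : pnum e x x 0 l = (0 == l) by rewrite pnum0 // dist_xx.
have := gl 0 1; have := gl 1 2.
rewrite !big_ord_recr !big_ord0 /= !n0 /G /= a0 hc1.
rewrite !(@pnum_diag _ e x 1 0) // !(@pnum_diag _ e x 1 2) // !(@pnum_diag _ e x 1 3) //.
rewrite !(@pnum_diag _ e x 2 1) // !(@pnum_diag _ e x 3 1) // !(@pnum_diag _ e x 3 2) //.
move=> h1 h2; split; lia.
Qed.

Lemma F_in n (e : rel 'I_n) u v w j : e v w -> dist e u w = j -> 0 < F e u v j.
Proof. by move=> h1 h2; rewrite /F card_gt0; apply/set0Pn; exists w; rewrite inE h1 h2 eqxx. Qed.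

Lemma facts n (e : rel 'I_n) b c x0 y0 : connected e -> symmetric e -> irreflexive e ->
  DRG e b c -> (forall x y, dist e x y <= 3) -> dist e x0 y0 = 3 ->
  [/\ c 1 = 1, b 3 = 0, 0 < b 2, 0 < c 2 & 0 < c 3] /\
  [/\ c 1 + a_num b c 1 + b 1 = b 0, c 2 + a_num b c 2 + b 2 = b 0 &
      c 3 + a_num b c 3 + b 3 = b 0].
Proof.
move=> hc hs hir hD hdm hxy.
have [z2 [hz2y hz2]] := dist_pred hc hxy.
have [z1 [hz1 hz1d]] := dist_pred hc hz2.
have [w0 [hw0 hw0d]] := dist_pred hc hz1d.
have hw0x := dist0 hc hw0d; rewrite hw0x in hw0.
have [hc1' _] := hD 1 isT x0 z1 hz1d.
have [_ hb3'] := hD 3 isT x0 y0 hxy.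
have [hc2' hb2'] := hD 2 isT x0 z2 hz2.
have [hc3' _] := hD 3 isT x0 y0 hxy.
have hpart u v := @part _ e b c u v hc hs hir hD.
have fg u v j := @FG _ e b c u v j hc hs hir hD hdm.
split; [split|split].
- rewrite -hc1' /F (_ : [set w | e z1 w & dist e x0 w == 0] = [set x0]) ?cards1 //.
  apply/setP => w; rewrite !inE; apply/idP/idP => [/andP [_ /eqP /(dist0 hc) ->]//|/eqP ->].
  by rewrite hs hw0 dist_xx.
- rewrite -hb3' /F card_sumb; apply: big1 => w _.
  by have := hdm x0 w; case: (dist e x0 w) => [|[|[|[|[|d]]]]] //; rewrite andbF.
- by rewrite -hb2'; apply: (F_in (w := y0)); rewrite // hs.
- by rewrite -hc2'; apply: (F_in (w := z1)); rewrite // hs.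
- by rewrite -hc3' /=; apply: (F_in (w := z2)); rewrite // hs.
- have := hpart x0 z1; rewrite hz1d !fg hz1d /G /=; apply; by [].
- have := hpart x0 z2; rewrite hz2 !fg hz2 /G /=; apply; by [].
- have := hpart x0 y0; rewrite hxy !fg hxy /G /=; apply; by [].
Qed.

Unset Implicit Arguments.
Local Open Scope ring_scope.

Lemma alg (K A1 A2 A3 B1 B2 C2 C3 N22 N23 N33 : int) :
 A1 + B1 + 1 = K -> A2 + B2 + C2 = K -> A3 + C3 = K -> A3*A3 = K + A1*A3 ->
 C3*A2 + A3*C3 = C3*A1 + C2*N22 ->
 C3*B2 + A3*A3 = K + A3*A1 + C2*N23 ->
 N22*B2 + N23*A3 = A3*B1 + N23*A2 + N33*C3 ->
 C3 != 0 ->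
 [/\ K = A3 * (A3 - A1), B1 = (A3 - A1 - 1) * (A3 + 1),
   C2*N23 = (A3 - A1 - 1)*A3*B2 & C2*N33 + (1+A3)*C2 = (A3 - A1 + A3)*B2].
Proof.
move=> h1 h2 h3 he g12 g13 g23 hc3.
have eK : K = A3 * (A3 - A1).
  have -> : K = A3*A3 - A1*A3 by rewrite he addrK.
  ring.
have eC3 : C3 = A3 * (A3 - A1 - 1).
  have -> : C3 = K - A3 by rewrite -h3; ring.
  rewrite eK; ring.
have eB1 : B1 = K - 1 - A1 by rewrite -h1; ring.
have eA2 : A2 = K - B2 - C2 by rewrite -h2; ring.
have e23 : C2*N23 = C3*B2.
  have : C2*N23 = C3*B2 + A3*A3 - K - A3*A1 by rewrite g13; ring.
  by rewrite he; move=> ->; ring.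
split; [exact: eK | rewrite eB1 eK; ring | rewrite e23 eC3; ring | ].
apply: (mulfI hc3).
have e22 : C2*N22 = C3*A2 + A3*C3 - C3*A1 by rewrite g12; ring.
have : C3*(C2*N33) = B2*(C2*N22) + (A3 - A2)*(C2*N23) - A3*B1*C2.
  have -> : C3 * (C2 * N33) = C2 * (N33*C3) by ring.
  have -> : N33*C3 = N22*B2 + N23*A3 - A3*B1 - N23*A2 by rewrite g23; ring.
  ring.
rewrite mulrDr => ->; rewrite e22 e23 eB1 eA2 eK eC3; ring.
Qed.

Lemma alg_nat (K A1 A2 A3 B1 B2 B3 C1 C2 C3 N22 N23 N33 : nat) :
 (C1 + A1 + B1 = K)%N -> (C2 + A2 + B2 = K)%N -> (C3 + A3 + B3 = K)%N -> C1 = 1%N -> B3 = 0%N ->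
  (A3*A3 = K + A1*A3)%N ->
  (C3*A2 + A3*C3 = C3*A1 + C2*N22)%N -> (C3*B2 + A3*A3 = K + A3*A1 + C2*N23)%N ->
  (N22*B2 + N23*A3 = A3*B1 + N23*A2 + N33*C3)%N -> (0 < C3)%N ->
 [/\ K%:Z = A3%:Z * (A3%:Z - A1%:Z), B1%:Z = (A3%:Z - A1%:Z - 1) * (A3%:Z + 1),
   C2%:Z*N23%:Z = (A3%:Z - A1%:Z - 1)*A3%:Z*B2%:Z &
   C2%:Z*N33%:Z + (1+A3%:Z)*C2%:Z = (A3%:Z - A1%:Z + A3%:Z)*B2%:Z].
Proof.
move=> h1 h2 h3 hc1 hb3 he g12 g13 g23 hc3.
subst C1 B3.
apply: (alg K%:Z A1%:Z A2%:Z A3%:Z B1%:Z B2%:Z C2%:Z C3%:Z N22%:Z N23%:Z N33%:Z).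
- by move/(congr1 Posz): h1; rewrite !PoszD => <-; ring.
- by move/(congr1 Posz): h2; rewrite !PoszD => <-; ring.
- by move/(congr1 Posz): h3; rewrite !PoszD => <-; ring.
- by move/(congr1 Posz): he; rewrite !PoszD !PoszM.
- by move/(congr1 Posz): g12; rewrite !PoszD !PoszM.
- by move/(congr1 Posz): g13; rewrite !PoszD !PoszM.
- by move/(congr1 Posz): g23; rewrite !PoszD !PoszM.
- by rewrite eqz_nat -lt0n.
Qed.

Theorem lemma10 (n : nat) (e : rel 'I_n) (b c : nat -> nat) :
  shilla e b c ->
  let bb : int := bGamma b c in
  let a3 : int := (a_num b c 3%N)%:Z in
  let b2 : int := (b 2%N)%:Z in
  let c2 : int := (c 2%N)%:Z in
  [/\ (c2 %| (bb - 1) * a3 * b2)%Z,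
      (c2 %| (bb - 1) * bb * a3 * (a3 + 1))%Z,
      (c2 %| bb * (a3 + 1) * b2)%Z,
      [/\ (c2 %| (bb + a3) * b2)%Z,
          (1 + a3) * c2 <= (bb + a3) * b2 &
          ((bb + a3) * b2 = (1 + a3) * c2 <->
             forall x y : 'I_n, dist e x y = 3%N -> pnum e x y 3%N 3%N = 0%N)]
    & (c2 %| (bb - 1) * bb * b2)%Z].
Proof.
move=> [[[hs hir] hc [hdm [x0 [y0 hxy]]] hDRG] [t0 [_ hev _ _ _]]].
have hD : DRG e b c := hDRG.
have [[hc1 hb3 hb2 hc2 hc3] [p1 p2 p3]] := facts hc hs hir hD hdm hxy.
have heig := eig_cons hc hs hir hD hdm hc1 hb2 hev.
have key x y : dist e x y = 3%N ->
  [/\ (b 0)%:Z = (a_num b c 3)%:Z * ((a_num b c 3)%:Z - (a_num b c 1)%:Z),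
   (b 1)%:Z = ((a_num b c 3)%:Z - (a_num b c 1)%:Z - 1) * ((a_num b c 3)%:Z + 1),
   (c 2)%:Z * (pnum e x y 2 3)%:Z =
     ((a_num b c 3)%:Z - (a_num b c 1)%:Z - 1) * (a_num b c 3)%:Z * (b 2)%:Z &
   (c 2)%:Z * (pnum e x y 3 3)%:Z + (1 + (a_num b c 3)%:Z) * (c 2)%:Z =
     ((a_num b c 3)%:Z - (a_num b c 1)%:Z + (a_num b c 3)%:Z) * (b 2)%:Z].
  move=> hxy'; have [g12 g13 g23] := pair3 hc hs hir hD hdm hc1 hxy'.
  exact: alg_nat p1 p2 p3 hc1 hb3 heig g12 g13 g23 hc3.
have [eK eB1 e23 e33] := key x0 y0 hxy.
have [hxx1 hxx2] := pairxx x0 hc hs hir hD hdm hc1.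
move=> bb a3 b2 c2.
have ebb : bb = a3 - (a_num b c 1)%:Z by [].
set N23 := (pnum e x0 y0 2 3)%:Z in e23.
set N33 := (pnum e x0 y0 3 3)%:Z in e33.
have E1 : c2 * N23 = (bb - 1) * a3 * b2 by rewrite e23.
have E2 : c2 * N33 + (1 + a3) * c2 = (bb + a3) * b2 by rewrite e33.
have c2nz : c2 != 0 by rewrite /c2 eqz_nat -lt0n.
split.
- by apply/dvdzP; exists N23; rewrite -E1 mulrC.
- apply/dvdzP; exists (pnum e x0 x0 2 2)%:Z.
  move/(congr1 Posz): hxx2; rewrite !PoszM hxx1 eK eB1 /c2 => <-.
  rewrite ebb /a3; ring.
- apply/dvdzP; exists (N33 + 1 + a3 + N23).
  have -> : (N33 + 1 + a3 + N23) * c2 = (c2 * N33 + (1 + a3) * c2) + c2 * N23 by ring.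
  rewrite E1 E2 ebb; ring.
- split.
  + by apply/dvdzP; exists (N33 + 1 + a3); rewrite -E2; ring.
  + rewrite -E2 lerDr; apply: mulr_ge0; by rewrite /c2 /N33.
  + split.
    * move=> heq x y hxy'; have [_ _ _ e33'] := key x y hxy'.
      move: e33'; rewrite -/a3 -/b2 -/c2 -/bb heq => /eqP.
      rewrite -subr_eq0 addrK mulf_eq0 (negbTE c2nz) /= => /eqP.
      by move/eqP; rewrite eqz_nat => /eqP.
    * move=> h0; rewrite -E2 /N33 (h0 x0 y0 hxy) mulr0 add0r //.
- apply/dvdzP; exists ((bb - 1) * (N33 + 1 + a3) - N23).
  have -> : ((bb - 1) * (N33 + 1 + a3) - N23) * c2 =
     (bb - 1) * (c2 * N33 + (1 + a3) * c2) - c2 * N23 by ring.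
  rewrite E1 E2; ring.
Qed.
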